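(* Let $(N,M_0)$ be a three-level PT-net system with transitions $T$ partitioned into low-level $L$, downgrading $D$ and high-level $H$. Then $(N,M_0)$ has the property BINI if and only if for every reachable marking $M_1$ of $(N,M_0)$ and every $h\in H$, $M_1[h\rangle M_2$ implies $\mathcal{L}(N\setminus(H\cup D),M_1)=\mathcal{L}(N\setminus(H\cup D),M_2)$.
   Context: A PT-net is $N=(P,T,F)$ with $P,T$ finite disjoint and $F:(P\times T)\cup(T\times P)\to\mathbb{N}$; markings $M:P\to\mathbb{N}$; $t$ enabled at $M$ ($M[t\rangle$) iff $M(p)\ge F(p,t)$ for all $p$, firing gives $M'(p)=M(p)+F(t,p)-F(p,t)$ ($M[t\rangle M'$); extended to sequences. $N\setminus T'$ deletes the transitions of $T'$. $\mathcal{L}(N\setminus(H\cup D),M)$ is the set of all $s\in L^*$ with $M[s\rangle$. For systems with disjoint place sets, $\mathcal{N}_1|\mathcal{N}_2$ has the union of places, the union of transitions (shared transitions synchronize, arcs inherited from each component on its own places), and union of initial markings; a high-level net system has only high-level transitions. In a two-level system (low $L$, high $H$) transitions in $L$ are observable, those in $H$ unobservable; weak bisimilarity $\approx$ is the existence of a relation between reachable markings containing the initial pair such that, for related $(M,M')$ and symmetrically, an observable step $M[l\rangle$ is matched by unobservable steps, $l$, unobservable steps leading to a related pair, and an unobservable step is matched by unobservable steps leading to a related pair. A two-level system $\mathcal{N}$ has BNDC iff for every high-level net system $\mathcal{N}'$ (places disjoint from those of $\mathcal{N}$) with transition set $H'$ disjoint from $L$, $\mathcal{N}\setminus H\approx(\mathcal{N}|\mathcal{N}')\setminus(H\setminus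 H')$. The three-level system $(N,M_0)$ has BINI iff the two-level system $(N\setminus D,M)$ (low $L$, high $H$) has BNDC for $M=M_0$ and for every marking $M$ with $M_0[\upsilon d\rangle M$ in $N$ for some $\upsilon\in T^*$, $d\in D$. *)

(* Defs.v *)
From Stdlib Require List.
From mathcomp Require Import all_boot.
Set Implicit Arguments. Unset Strict Implicit. Unset Printing Implicit Defensive.

(* Transition names live in an arbitrary type A (shared name space, so that
   shared transitions of a parallel composition are those with equal names).
   A PT-net over places P: its (finite) transition set is the boolean predicate
   [tr], arc weights F(p,t) = pre p t and F(t,p) = post t p (values of pre/post
   at names outside [tr] are irrelevant: such names can never fire). *)
Record net (P A : Type) := Net {
  tr   : A -> bool;
  pre  : P -> A -> nat;
  post : A -> P -> nat }.

Arguments Net {P A}.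

Definition finite_tr P A (N : net P A) : Prop :=
  exists s : list A, forall a, tr N a -> List.In a s.

Definition step P A (N : net P A) (M : P -> nat) (t : A) (M' : P -> nat) : Prop :=
  tr N t /\ (forall p, pre N p t <= M p) /\
  (forall p, M' p = M p + post N t p - pre N p t).

Inductive fires P A (N : net P A) : (P -> nat) -> seq A -> (P -> nat) -> Prop :=
| fires_nil M : fires N M [::] M
| fires_cons M t M1 s M2 : step N M t M1 -> fires N M1 s M2 -> fires N M (t :: s) M2.

Definition reachable P A (N : net P A) (M0 M : P -> nat) : Prop :=
  exists s, fires N M0 s M.

Definition lang P A (N : net P A) (M : P -> nat) (s : seq A) : Prop :=
  exists M', fires N M s M'.

Definition restrict P A (N : net P A) (X : A -> bool) : net P A :=
  Net (fun a => tr N a && ~~ X a) (pre N) (post N).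

Definition par P1 P2 A (N1 : net P1 A) (N2 : net P2 A) : net (P1 + P2)%type A :=
  Net (fun a => tr N1 a || tr N2 a)
      (fun x a => match x with
                  | inl p => if tr N1 a then pre N1 p a else 0
                  | inr q => if tr N2 a then pre N2 q a else 0 end)
      (fun a x => match x with
                  | inl p => if tr N1 a then post N1 a p else 0
                  | inr q => if tr N2 a then post N2 a q else 0 end).

Definition union_mark P1 P2 (M1 : P1 -> nat) (M2 : P2 -> nat) : (P1 + P2)%type -> nat :=
  fun x => match x with inl p => M1 p | inr q => M2 q end.

Definition tau_star P A (L : A -> bool) (N : net P A) (M M' : P -> nat) : Prop :=
  exists s, all (fun a => ~~ L a) s /\ fires N M s M'.

Definition weak_obs P A (L : A -> bool) (N : net P A) (M : P -> nat) (l : A)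
  (M' : P -> nat) : Prop :=
  exists M1 M2, tau_star L N M M1 /\ step N M1 l M2 /\ tau_star L N M2 M'.

Definition weak_sim P1 P2 A (L : A -> bool) (N1 : net P1 A) (N2 : net P2 A)
  (R : (P1 -> nat) -> (P2 -> nat) -> Prop) : Prop :=
  forall M1 M2, R M1 M2 ->
    (forall l M1', L l -> step N1 M1 l M1' ->
        exists M2', weak_obs L N2 M2 l M2' /\ R M1' M2') /\
    (forall h M1', ~~ L h -> step N1 M1 h M1' ->
        exists M2', tau_star L N2 M2 M2' /\ R M1' M2').

Definition wbisim P1 P2 A (L : A -> bool) (N1 : net P1 A) (M01 : P1 -> nat)
  (N2 : net P2 A) (M02 : P2 -> nat) : Prop :=
  exists R : (P1 -> nat) -> (P2 -> nat) -> Prop,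
    (forall M1 M2, R M1 M2 -> reachable N1 M01 M1 /\ reachable N2 M02 M2) /\
    R M01 M02 /\
    weak_sim L N1 N2 R /\ weak_sim L N2 N1 (fun M2 M1 => R M1 M2).

(* BNDC of the two-level system (N, M0) with low L and high H:
   for every high-level net system (N', M0') with finitely many transitions H',
   none in L, and finitely many places disjoint from those of N,
   N \ H  ~  (N | N') \ (H \ H'). *)
Definition BNDC P A (N : net P A) (L H : A -> bool) (M0 : P -> nat) : Prop :=
  forall (P' : finType) (N' : net P' A) (M0' : P' -> nat),
    finite_tr N' -> (forall a, tr N' a -> ~~ L a) ->
    wbisim L (restrict N H) M0
             (restrict (par N N') (fun a => H a && ~~ tr N' a)) (union_mark M0 M0').

Definition BINI P A (N : net P A) (L D H : A -> bool) (M0 : P -> nat) : Prop :=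
  BNDC (restrict N D) L H M0 /\
  forall (v : seq A) (d : A) (M : P -> nat),
    D d -> (exists M1, fires N M0 v M1 /\ step N M1 d M) ->
    BNDC (restrict N D) L H M.

Definition three_level P A (N : net P A) (L D H : A -> bool) : Prop :=
  finite_tr N /\
  (forall a, tr N a = [|| L a, D a | H a]) /\
  (forall a, ~~ (L a && D a)) /\ (forall a, ~~ (L a && H a)) /\
  (forall a, ~~ (D a && H a)).

(* Main.v *)
Require Import Defs.
From mathcomp Require Import all_boot.
From Stdlib Require Import FunctionalExtensionality Lia.
From mathcomp Require Import zify.
Set Implicit Arguments. Unset Strict Implicit. Unset Printing Implicit Defensive.

Lemma step_det P A (N : net P A) M t M1 M2 :
  step N M t M1 -> step N M t M2 -> M1 = M2.
Proof.
move=> [_ [_ H1]] [_ [_ H2]]; apply: functional_extensionality => p.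
by rewrite H1 H2.
Qed.

Lemma fires_det P A (N : net P A) M s M1 M2 :
  fires N M s M1 -> fires N M s M2 -> M1 = M2.
Proof.
move=> F; elim: F M2 => [Mx | Mx t Ma s' Mb Hs F IH] M2 F2; inversion F2; subst.
  by [].
apply: IH; by rewrite (step_det Hs H2).
Qed.

Lemma fires_cat P A (N : net P A) M s1 M1 s2 M2 :
  fires N M s1 M1 -> fires N M1 s2 M2 -> fires N M (s1 ++ s2) M2.
Proof.
move=> F; elim: F => [M' | M' t Ma s' Mb Hs F IH] // F2.
by econstructor; [exact Hs | exact: IH].
Qed.

Lemma fires_rcons P A (N : net P A) M s M1 t M2 :
  fires N M s M1 -> step N M1 t M2 -> fires N M (rcons s t) M2.
Proof.
move=> F S; rewrite -cats1; apply: (fires_cat F).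
econstructor; [exact S | constructor].
Qed.

Lemma reach_trans P A (N : net P A) M1 M2 M3 :
  reachable N M1 M2 -> reachable N M2 M3 -> reachable N M1 M3.
Proof. move=> [s1 F1] [s2 F2]; exists (s1 ++ s2); exact: fires_cat F1 F2. Qed.

Lemma reach_step P A (N : net P A) M1 M2 t M3 :
  reachable N M1 M2 -> step N M2 t M3 -> reachable N M1 M3.
Proof. move=> [s F] S; exists (rcons s t); exact: fires_rcons F S. Qed.

Lemma lang_cons P A (N : net P A) X t X' s :
  step N X t X' -> (lang N X (t :: s) <-> lang N X' s).
Proof.
move=> S; split.
  move=> [M' F]; inversion F; subst; exists M'; by rewrite (step_det S H2).
move=> [M' F]; exists M'; econstructor; [exact S | exact F].
Qed.

Lemma fires_restrict P A (N : net P A) X M s M' :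
  fires (restrict N X) M s M' -> fires N M s M'.
Proof.
elim=> [M1 | M1 t Ma s' Mb [Ht [Hp Hn]] F IH]; first constructor.
econstructor; last exact IH.
split; last by split.
by move: Ht => /= /andP [].
Qed.

Lemma trE P A (N : net P A) (D H : A -> bool) a :
  (tr N a && ~~ D a) && ~~ H a = tr N a && ~~ (H a || D a).
Proof. by case: (tr N a); case: (D a); case: (H a). Qed.

Lemma step_NDH P A (N : net P A) D H M t M' :
  step (restrict (restrict N D) H) M t M' <->
  step (restrict N (fun a => H a || D a)) M t M'.
Proof. by rewrite /step /= trE. Qed.

Lemma fires_NDH P A (N : net P A) D H M s M' :
  fires (restrict (restrict N D) H) M s M' <->
  fires (restrict N (fun a => H a || D a)) M s M'.
Proof.
split; elim=> [M1 | M1 t Ma s' Mb S F IH]; try constructor;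
  econstructor; try exact IH; by apply/step_NDH.
Qed.

Lemma lang_NDH P A (N : net P A) D H M s :
  lang (restrict (restrict N D) H) M s <->
  lang (restrict N (fun a => H a || D a)) M s.
Proof. by split=> -[M' F]; exists M'; apply/fires_NDH. Qed.

Definition left P P' (Y : (P + P')%type -> nat) : P -> nat := fun p => Y (inl p).

Lemma NDH_L P A (N : net P A) L D H a :
  three_level N L D H -> tr (restrict (restrict N D) H) a -> L a.
Proof.
move=> [_ [TL _]] /=; rewrite TL.
by case: (L a); case: (D a); case: (H a).
Qed.

Lemma tau_NDH P A (N : net P A) L D H X X' :
  three_level N L D H -> tau_star L (restrict (restrict N D) H) X X' -> X' = X.
Proof.
move=> T [[|t s] [Hall F]]; inversion F; subst => //.
move: H3 => [Ht _]; move: (NDH_L T Ht); move: Hall => /= /andP [] /negP. done.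
Qed.

Lemma comp_step_proj P A P' (N : net P A) (N' : net P' A) X Y t Y' :
  step (restrict (par N N') X) Y t Y' ->
  (tr N t /\ step N (left Y) t (left Y')) \/ (~~ tr N t /\ left Y' = left Y).
Proof.
move=> [Htr [Hpre Hnew]].
case E: (tr N t).
  left; split=>//; split=>//; split.
    by move=> p; have := Hpre (inl p); rewrite /= E.
  by move=> p; rewrite /left Hnew /= E.
right; split=> //; apply: functional_extensionality => p.
by rewrite /left Hnew /= E addn0 subn0.
Qed.

Lemma comp_reach P A P' (N : net P A) (N' : net P' A) X Y s Y' :
  fires (restrict (par N N') X) Y s Y' -> reachable N (left Y) (left Y').
Proof.
elim=> [M | M t Ma s' Mb S F IH]; first by exists [::]; constructor.
case: (comp_step_proj S) => [[_ S'] | [_ E]].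
  move: IH => [s1 F1]; exists (t :: s1); econstructor; [exact S' | exact F1].
by rewrite -E.
Qed.

Lemma lang1 P A (N : net P A) M t : lang N M [:: t] -> exists M', step N M t M'.
Proof. move=> [Mf F]; inversion F; subst; by exists M1. Qed.

Lemma bndc_of A (P : finType) (N : net P A) (L D H : A -> bool) M0 :
  three_level N L D H ->
  (forall (M1 : P -> nat) (h : A) (M2 : P -> nat),
      reachable N M0 M1 -> H h -> step N M1 h M2 ->
      forall s : seq A,
        lang (restrict N (fun a => H a || D a)) M1 s <->
        lang (restrict N (fun a => H a || D a)) M2 s) ->
  forall M, reachable N M0 M -> BNDC (restrict N D) L H M.
Proof.
move=> T Cond M RM P' N' M0' fin hL.
have [_ [TL [dLD [dLH dDH]]]] := T.
set C := restrict (par (restrict N D) N') (fun a => H a && ~~ tr N' a).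
exists (fun X Y => reachable (restrict (restrict N D) H) M X /\
   reachable C (union_mark M M0') Y /\
   forall s, lang (restrict N (fun a => H a || D a)) X s <->
             lang (restrict N (fun a => H a || D a)) (left Y) s).
split; first by move=> ? ? [? [? _]].
split; first by split; [exists [::]; constructor | split; [exists [::]; constructor|]].
split.
- move=> X Y [RX [RY EQ]]; split.
  + move=> l X' Ll SX.
    have SX' := SX; move/step_NDH: SX' => SX'.
    have : lang (restrict N (fun a => H a || D a)) X [:: l].
      by exists X'; econstructor; [exact SX' | constructor].
    move=> Hl1; have [M1 H2] := lang1 (proj1 (EQ [:: l]) Hl1).
    pose Y' : (P + P')%type -> nat := (fun x => match x with inl p => M1 p | inr q => Y (inr q) end).
    have Ntl : tr N' l = false by apply/negP => /hL; rewrite Ll.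
    move: (H2) => [Ht [Hp Hn]].
    move: Ht => /= /andP [Ht]; rewrite negb_or => /andP [nH nD].
    have SC : step C Y l Y'.
      split; first by rewrite /= Ht nD Ntl (negbTE nH).
      split.
        by move=> [p | q] /=; rewrite ?Ht ?nD ?Ntl //=; apply: Hp.
      by move=> [p | q] /=; rewrite ?Ht ?nD ?Ntl //= ?Hn // addn0 subn0.
    exists Y'; split.
      exists Y, Y'; split; first by exists [::]; split; [|constructor].
      split=> //; by exists [::]; split; [|constructor].
    split; first exact: reach_step RX SX.
    split; first exact: reach_step RY SC.
    move=> s; rewrite -(lang_cons s SX') EQ.
    exact: (lang_cons s H2).
  + move=> h X' Lh [Ht _]; by move: (NDH_L T Ht); rewrite (negbTE Lh).
- move=> Y X [RX [RY EQ]]; split.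
  + move=> l Y' Ll SY.
    have Ntl : tr N' l = false by apply/negP => /hL; rewrite Ll.
    have nH : H l = false by apply/negP => Hl; move: (dLH l); rewrite Ll Hl.
    case: (comp_step_proj SY) => [[Ht S] | [Ht _]]; last first.
      by move: SY => [Htr _]; move: Htr; rewrite /= Ntl orbF; move: Ht => /= /negbTE ->.
    have S' : step (restrict N (fun a => H a || D a)) (left Y) l (left Y').
      move: S => [_ [Hp Hn]]; split=> //.
      by move: Ht => /= /andP [-> nD]; rewrite /= nH.
    have : lang (restrict N (fun a => H a || D a)) (left Y) [:: l].
      by exists (left Y'); econstructor; [exact S' | constructor].
    move=> Hl1; have [M1 H2] := lang1 (proj2 (EQ [:: l]) Hl1).
    exists M1; split.
      exists X, M1; split; first by exists [::]; split; [|constructor].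
      split; first by apply/step_NDH.
      by exists [::]; split; [|constructor].
    split; first by apply: reach_step RX _; apply/step_NDH; exact H2.
    split; first exact: reach_step RY SY.
    move=> s; rewrite -(lang_cons s H2) EQ.
    exact: (lang_cons s S').
  + move=> h Y' Lh SY.
    exists X; split; first by exists [::]; split; [|constructor].
    split=> //; split; first exact: reach_step RY SY.
    move=> s; rewrite EQ.
    case: (comp_step_proj SY) => [[Ht S] | [_ ->]] //.
    apply: Cond.
    + apply: reach_trans RM _; move: RY => [s0 F0].
      have [s1 F1] := comp_reach F0; exists s1; exact: fires_restrict F1.
    + move: Ht => /= /andP [Ht nD]; move: Ht; rewrite TL (negbTE Lh) (negbTE nD) => HH; exact HH.
    + by move: S => [Ht' [Hp Hn]]; split=> //; move: Ht' => /= /andP [].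
Qed.

Definition Nb A (H : A -> bool) : net unit A := Net H (fun _ _ => 1) (fun _ _ => 0).

Definition upd P (Y : (P + unit)%type -> nat) (M : P -> nat) : (P + unit)%type -> nat :=
  fun x => match x with inl p => M p | inr u => Y (inr u) end.

Lemma fires_consE P A (N : net P A) M t s M' :
  fires N M (t :: s) M' -> exists M1, step N M t M1 /\ fires N M1 s M'.
Proof. move=> F; inversion F; subst; by exists M1. Qed.

Section Comp.
Variables (A : Type) (P : Type) (N : net P A) (L D H : A -> bool).
Hypothesis T : three_level N L D H.
Let C := restrict (par (restrict N D) (Nb H)) (fun a => H a && ~~ tr (Nb H) a).
Let NDH := restrict (restrict N D) H.

Lemma comp_step M t M' q :
  step (restrict N D) M t M' -> (H t -> 0 < q) ->
  step C (union_mark M (fun _ => q)) t (union_mark M' (fun _ => q - H t)).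
Proof.
move=> [Ht [Hp Hn]] Hq; move: Ht => /= Ht.
split; first by rewrite /= Ht /=; case: (H t).
split.
  move=> [p | u] /=; first by move: (Hp p); rewrite /= Ht.
  by case E: (H t) => //; apply: Hq.
move=> [p | u] /=; first by rewrite Ht Hn.
by case: (H t); rewrite ?addn0 ?subn0.
Qed.

Lemma comp_fires Ma s Mb :
  fires (restrict N D) Ma s Mb -> forall q, count H s <= q ->
  fires C (union_mark Ma (fun _ => q)) s (union_mark Mb (fun _ => q - count H s)).
Proof.
elim=> [M1 | M1 t Mx s' Mb' S F IH] q Hq.
  by rewrite subn0; constructor.
econstructor.
  apply: comp_step S _ => Ht; move: Hq => /=; rewrite Ht; lia.
have := IH (q - H t); rewrite /= subnDA; apply.
move: Hq => /=; lia.
Qed.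

Lemma zero_step Y t Y' :
  step C Y t Y' -> Y (inr tt) = 0 ->
  L t /\ step NDH (left Y) t (left Y') /\ Y' (inr tt) = 0.
Proof.
have [_ [TL [dLD [dLH dDH]]]] := T.
move=> [Htr [Hp Hn]] Y0.
have nH : H t = false.
  by move: (Hp (inr tt)); rewrite /= Y0; case: (H t).
move: Htr; rewrite /= nH orbF andbT => /andP [Ht nD].
split; first by move: Ht; rewrite TL nH (negbTE nD) !orbF.
split; last by rewrite Hn /= nH Y0.
split; first by rewrite /= Ht nD nH.
split.
  by move=> p; move: (Hp (inl p)); rewrite /= Ht nD.
by move=> p; rewrite /left Hn /= Ht nD.
Qed.

Lemma zero_tau Y Y' : tau_star L C Y Y' -> Y (inr tt) = 0 -> Y' = Y.
Proof.
move=> [[|t s] [Hall F]] Y0; first by inversion F.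
have [M1 [H2 _]] := fires_consE F.
have [Lt _] := zero_step H2 Y0.
by move: Hall => /= /andP []; rewrite Lt.
Qed.

Lemma lift_step Y t M' : step NDH (left Y) t M' -> step C Y t (upd Y M').
Proof.
move=> [Ht [Hp Hn]].
move: Ht => /= /andP [/andP [Ht nD] nH].
split; first by rewrite /= Ht nD (negbTE nH).
split.
  move=> [p | u] /=; first by rewrite Ht nD; apply: Hp.
  by rewrite (negbTE nH).
move=> [p | u] /=; first by rewrite Ht nD; apply: Hn.
by rewrite (negbTE nH) addn0 subn0.
Qed.

Lemma track (R : (P -> nat) -> ((P + unit)%type -> nat) -> Prop) Y s Y' :
  weak_sim L C NDH (fun Y X => R X Y) -> fires C Y s Y' ->
  forall X, R X Y -> exists X', R X' Y' /\ fires NDH X (filter L s) X'.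
Proof.
move=> WS; elim=> [M | M t Ma s' Mb S F IH] X RX.
  by exists X; split=> //; constructor.
have [W1 W2] := WS _ _ RX.
case Lt: (L t).
  have [X2 [[X1 [X3 [T1 [S2 T3]]]] R2]] := W1 t Ma Lt S.
  rewrite (tau_NDH T T1) in S2.
  have E := tau_NDH T T3; subst X2.
  have [X' [R' F']] := IH _ R2.
  exists X'; split=> //=; rewrite Lt; econstructor; [exact S2 | exact F'].
have [X2 [T2 R2]] := W2 t Ma (negbT Lt) S.
have E := tau_NDH T T2; subst X2.
have [X' [R' F']] := IH _ R2.
by exists X'; split=> //=; rewrite Lt.
Qed.

Lemma zero_lang (R : (P -> nat) -> ((P + unit)%type -> nat) -> Prop) :
  weak_sim L NDH C R -> weak_sim L C NDH (fun Y X => R X Y) ->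
  forall s X Y, R X Y -> Y (inr tt) = 0 ->
  (lang NDH (left Y) s <-> lang NDH X s).
Proof.
move=> WS1 WS2; elim=> [|t s IH] X Y RXY Y0.
  by split=> _; [exists X | exists (left Y)]; constructor.
split.
  move=> [Mf F]; have [M1 [H2 H5]] := fires_consE F.
  have SC := lift_step H2.
  have [Lt _] := zero_step SC Y0.
  have [W1 _] := WS2 _ _ RXY.
  have [X2 [[X1 [X3 [T1 [S2 T3]]]] R2]] := W1 t _ Lt SC.
  rewrite (tau_NDH T T1) in S2.
  have E := tau_NDH T T3; subst X2.
  have /(IH _ _ R2) : (upd Y M1) (inr tt) = 0 by [].
  move=> EQ; have : lang NDH (left (upd Y M1)) s by exists Mf.
  move/EQ => [Mg Fg]; exists Mg; econstructor; [exact S2 | exact Fg].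
move=> [Mf F]; have [M1 [H2 H5]] := fires_consE F.
have Lt := NDH_L T (proj1 H2).
have [W1 _] := WS1 _ _ RXY.
have [Y2 [[Y1 [Y3 [T1 [S2 T3]]]] R2]] := W1 t _ Lt H2.
rewrite (zero_tau T1 Y0) in S2.
have [_ [S3 Y30]] := zero_step S2 Y0.
have E := zero_tau T3 Y30; subst Y2.
have /(IH _ _ R2) EQ := Y30.
have : lang NDH M1 s by exists Mf.
move/EQ => [Mg Fg]; exists Mg; econstructor; [exact S3 | exact Fg].
Qed.

End Comp.

Definition good P A (N : net P A) (D : A -> bool) M0 M :=
  M = M0 \/ exists v d Mx, D d /\ fires N M0 v Mx /\ step N Mx d M.

Lemma decomp P A (N : net P A) D M0 Ma s Mb :
  fires N Ma s Mb -> forall Mg sg v, good N D M0 Mg ->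
  fires (restrict N D) Mg sg Ma -> fires N M0 v Ma ->
  exists Mg' sg', good N D M0 Mg' /\ fires (restrict N D) Mg' sg' Mb.
Proof.
elim=> [M | M t Mx s' Mb' S F IH] Mg sg v G Fg Fv.
  by exists Mg, sg.
case Dt: (D t).
  apply: (IH Mx [::] (rcons v t)); last exact: fires_rcons Fv S.
    by right; exists v, t, M.
  constructor.
apply: (IH Mg (rcons sg t) (rcons v t)) => //; last exact: fires_rcons Fv S.
apply: fires_rcons Fg _; move: S => [Ht [Hp Hn]]; split=> //.
by rewrite /= Ht Dt.
Qed.

Theorem lemma4 (A : Type) (P : finType) (N : net P A) (L D H : A -> bool)
  (M0 : P -> nat) :
  three_level N L D H ->
  (BINI N L D H M0 <->
   (forall (M1 : P -> nat) (h : A) (M2 : P -> nat),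
      reachable N M0 M1 -> H h -> step N M1 h M2 ->
      forall s : seq A,
        lang (restrict N (fun a => H a || D a)) M1 s <->
        lang (restrict N (fun a => H a || D a)) M2 s)).
Proof.
move=> T; have T' := T; move: T' => [[lst Hlst] [TL [dLD [dLH dDH]]]].
split; last first.
  move=> Cond; split.
    have R0 : reachable N M0 M0 by exists [::]; constructor.
    exact: (bndc_of T Cond R0).
  move=> v d M Dd [Mx [Fv Sd]].
  have RM : reachable N M0 M by exists (rcons v d); exact: fires_rcons Fv Sd.
  exact: (bndc_of T Cond RM).
move=> [B0 B1] M1 h M2 [s1 F1] Hh S12 s.
have [Mg [sg [Gg Fsg]]] :=
  @decomp _ _ N D M0 M0 s1 M1 F1 M0 [::] [::] (or_introl erefl) (fires_nil _ _) (fires_nil _ _).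
have BN : BNDC (restrict N D) L H Mg.
  case: Gg => [-> // | [v [d [Mx [Dd [Fv Sd]]]]]].
  by apply: (B1 v d Mg Dd); exists Mx.
have S12' : step (restrict N D) M1 h M2.
  move: S12 => [Ht [Hp Hn]]; split=> //.
  by rewrite /= Ht; apply/negP => Dh; move: (dDH h); rewrite Dh Hh.
have Lh : L h = false by apply/negP => Lh; move: (dLH h); rewrite Lh Hh.
have fin : finite_tr (Nb H) by exists lst => a /= Ha; apply: Hlst; rewrite TL Ha !orbT.
have hL : forall a, tr (Nb H) a -> ~~ L a.
  by move=> a /= Ha; apply/negP => La; move: (dLH a); rewrite La Ha.
have key : forall sg' Me, fires (restrict N D) Mg sg' Me ->
  exists X, fires (restrict (restrict N D) H) Mg (filter L sg') X /\
   forall s, lang (restrict (restrict N D) H) Me s <-> lang (restrict (restrict N D) H) X s.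
  move=> sg' Me Fe.
  have [R [_ [R0 [W1 W2]]]] := BN _ (Nb H) (fun _ => count H sg') fin hL.
  have FC := comp_fires Fe (leqnn (count H sg')).
  have [X [RX FX]] := track T W2 FC R0.
  exists X; split=> // s0.
  have Y0 : union_mark Me (fun _ : unit => count H sg' - count H sg') (inr tt) = 0.
    by rewrite /= subnn.
  exact: (zero_lang T W1 W2 s0 RX Y0).
have [X1 [FX1 E1]] := key _ _ Fsg.
have [X2 [FX2 E2]] := key _ _ (fires_rcons Fsg S12').
rewrite filter_rcons Lh in FX2.
rewrite (fires_det FX2 FX1) in E2.
by rewrite -!lang_NDH E1 E2.
Qed.
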